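(* Let $q$ be a power of $2$. Let $b\in\mathbb{F}_q^*$ and $\delta\in\mathbb{F}_{q^2}$ with $b\,\mathrm{Tr}_{q^2/q}(\delta)^2=1$. Then the compositional inverse of $$P(x)=b(x^q+x+\delta)^{q+2}+x$$ over $\mathbb{F}_{q^2}$ is $$P^{-1}(x)=b\left(\left(\mathrm{Tr}_{q^2/q}(\delta)(x^q+x)+\delta^{q+1}\right)^{q/2}+\delta\right)^{q+2}+x.$$
   Context: $\mathrm{Tr}_{q^2/q}(y)=y+y^q$. The compositional inverse of a permutation polynomial $f$ of $\mathbb{F}_{Q}$ is the unique polynomial $f^{-1}$ (modulo $x^Q-x$) with $f(f^{-1}(c))=f^{-1}(f(c))=c$ for all $c\in\mathbb{F}_Q$; in particular the statement includes that $P$ permutes $\mathbb{F}_{q^2}$. *)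

(* Defs.v *)
From HB Require Import structures.
From mathcomp Require Import all_boot all_order all_algebra all_field.
Set Implicit Arguments. Unset Strict Implicit. Unset Printing Implicit Defensive.
Import GRing.Theory.
Local Open Scope ring_scope.

Definition trq2q (F : nzRingType) (q : nat) (y : F) : F := y + y ^+ q.

Definition Ppoly (F : nzRingType) (q : nat) (b delta : F) (x : F) : F :=
  b * (x ^+ q + x + delta) ^+ (q + 2) + x.

Definition Pinv (F : nzRingType) (q : nat) (b delta : F) (x : F) : F :=
  b * ((trq2q q delta * (x ^+ q + x) + delta ^+ (q + 1)) ^+ (q %/ 2) + delta)
      ^+ (q + 2) + x.

(* Main.v *)
Require Import Defs.
From HB Require Import structures.
From mathcomp Require Import all_boot all_order all_algebra all_field.
From mathcomp Require Import ring.
Import GRing.Theory.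
Local Open Scope ring_scope.

Lemma frobD (F : comNzRingType) (k : nat) (x y : F) :
  1 + 1 = 0 :> F -> (x + y) ^+ (2 ^ k) = x ^+ (2 ^ k) + y ^+ (2 ^ k).
Proof.
move=> h2; elim: k => [|k IH]; first by rewrite !expr1.
rewrite expnSr !exprM IH.
have -> : (x ^+ (2 ^ k) + y ^+ (2 ^ k)) ^+ 2 =
  (x ^+ (2 ^ k)) ^+ 2 + (y ^+ (2 ^ k)) ^+ 2 + (1 + 1) * (x ^+ (2 ^ k) * y ^+ (2 ^ k)) by ring.
by rewrite h2 mul0r addr0.
Qed.

Theorem theorem3p6 (F : finFieldType) (k q : nat) (b delta : F) :
  q = (2 ^ k)%N ->
  #|F| = (q ^ 2)%N ->
  b != 0 -> b ^+ q = b ->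
  b * trq2q q delta ^+ 2 = 1 ->
  (forall c : F, Ppoly q b delta (Pinv q b delta c) = c) /\
  (forall c : F, Pinv q b delta (Ppoly q b delta c) = c).
Proof.
move=> hq hcard bn0 hb hT.
have k0 : (0 < k)%N.
  case: k hq => [|k'] // hq; exfalso.
  have /card_le1P h : (#|F| <= 1)%N by rewrite hcard hq.
  by move: (h 0 isT 1); rewrite !inE oner_eq0.
have e1 : (1 : F) = -1.
  rewrite -[RHS](expf_card (-1)) hcard.
  have -> : (q ^ 2 = 2 * (2 ^ k.-1 * q))%N.
    by rewrite mulnA -expnS prednK // -hq mulnn.
  by rewrite exprM sqrrN expr1n expr1n.
have h2 : (1 + 1 : F) = 0 by rewrite {1}e1 addNr.
have xx : forall x : F, x + x = 0 by move=> x; rewrite -[x]mul1r -mulrDl h2 mul0r.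
have fD : forall x y : F, (x + y) ^+ q = x ^+ q + y ^+ q by move=> x y; rewrite hq frobD.
have fF : forall x : F, (x ^+ q) ^+ q = x by move=> x; rewrite -exprM mulnn -hcard expf_card.
have q2 : (q %/ 2 * 2 = q)%N.
  by rewrite divnK // hq -(prednK k0) expnS dvdn_mulr.
set T := trq2q q delta.
set N := delta ^+ (q + 1).
have fT : T ^+ q = T by rewrite /T /trq2q fD fF addrC.
have fN : N ^+ q = N by rewrite /N exprAC exprD fF expr1 exprD expr1 mulrC.
have key : forall w, w ^+ q = w ->
    (b * (w + delta) ^+ (q + 2)) ^+ q + b * (w + delta) ^+ (q + 2)
    = b * T * (w ^+ 2 + w * T + N).
  move=> w hw.
  rewrite /T /N /trq2q !exprD !expr1 !exprMn hb fF !fD hw.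
  apply/eqP; rewrite -subr_eq0; apply/eqP.
  transitivity ((1 + 1) * (b * w * (w + delta) * (w + delta ^+ q))); first by ring.
  by rewrite h2 mul0r.
split.
- move=> c.
  set v := c ^+ q + c.
  have fv : v ^+ q = v by rewrite /v fD fF addrC.
  set z := T * v + N.
  have fz : z ^+ q = z by rewrite /z fD exprMn fT fv fN.
  set w := z ^+ (q %/ 2).
  have fw : w ^+ q = w by rewrite /w exprAC fz.
  have w2 : w ^+ 2 = z by rewrite /w -exprM q2 fz.
  have tP : (Pinv q b delta c) ^+ q + Pinv q b delta c = w.
    rewrite /Pinv -/T -/N -/v -/z -/w fD addrACA key // w2.
    apply/eqP; rewrite -subr_eq0; apply/eqP.
    transitivity ((b * T ^+ 2 - 1) * (v + w) + (1 + 1) * (v + b * T * N)).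
      by rewrite /z /v; ring.
    by rewrite hT subrr h2 !mul0r addr0.
  rewrite /Ppoly tP /Pinv -/T -/N -/v -/z -/w addrA xx add0r //.
- move=> x.
  set u := x ^+ q + x.
  have fu : u ^+ q = u by rewrite /u fD fF addrC.
  have tP : (Ppoly q b delta x) ^+ q + Ppoly q b delta x = b * T * (u ^+ 2 + u * T + N) + u.
    by rewrite /Ppoly fD addrACA -/u key.
  rewrite /Pinv -/T -/N tP.
  have -> : T * (b * T * (u ^+ 2 + u * T + N) + u) + N = u ^+ 2.
    apply/eqP; rewrite -subr_eq0; apply/eqP.
    transitivity ((b * T ^+ 2 - 1) * (u ^+ 2 + u * T + N) + (1 + 1) * (u * T + N)).
      by ring.
    by rewrite hT subrr h2 !mul0r addr0.
  rewrite -exprM mulnC q2 fu /Ppoly -/u addrA xx add0r //.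
Qed.
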